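(* Every dp-minimal integral domain $R$ is divided: for every prime ideal $\mathfrak p$ of $R$ and every $a\in R$, either $\mathfrak p\subseteq aR$ or $aR\subseteq\mathfrak p$ (equivalently, $\mathfrak p=\mathfrak pR_{\mathfrak p}$). In particular, there exists $N\in\mathbb N$ such that for all $a,b$ in the maximal ideal of $R$, either $a\in bR$ or $b^N\in aR$.
   Context: Rings are commutative with identity; dp-minimal means the theory in the language of rings has dp-rank $1$ (such domains are local). A prime ideal $\mathfrak p$ is divided if it is comparable under inclusion with every principal ideal; a ring is divided if every prime ideal is divided. *)

(* Defs.v *)
From HB Require Import structures.
From mathcomp Require Import all_boot all_algebra.
Set Implicit Arguments. Unset Strict Implicit. Unset Printing Implicit Defensive.
Import GRing.Theory.
Local Open Scope ring_scope.

Definition is_ideal (R : comRingType) (I : R -> Prop) : Prop :=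
  [/\ I 0, (forall x y, I x -> I y -> I (x + y)) &
      (forall r x, I x -> I (r * x))].

Definition is_prime_ideal (R : comRingType) (P : R -> Prop) : Prop :=
  [/\ is_ideal P, ~ P 1 & (forall x y, P (x * y) -> P x \/ P y)].

Definition is_maximal_ideal (R : comRingType) (M : R -> Prop) : Prop :=
  [/\ is_ideal M, ~ M 1 &
      (forall J : R -> Prop, is_ideal J -> (forall x, M x -> J x) ->
         (forall x, J x <-> M x) \/ J 1)].

Definition in_principal (R : comRingType) (a x : R) : Prop :=
  exists r : R, x = a * r.

(* de Bruijn variables: variable 0 is the innermost bound / first free var *)
Inductive rterm : Type :=
| TVar of nat
| TZero | TOne
| TAdd of rterm & rterm
| TOpp of rterm
| TMul of rterm & rterm.

Inductive rform : Type :=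
| FEq of rterm & rterm
| FNot of rform
| FAnd of rform & rform
| FOr of rform & rform
| FEx of rform
| FAll of rform.

Definition env_cons (R : Type) (a : R) (e : nat -> R) : nat -> R :=
  fun i => match i with 0%N => a | k.+1 => e k end.

Fixpoint eval_term (R : comRingType) (e : nat -> R) (t : rterm) : R :=
  match t with
  | TVar i => e i
  | TZero => 0
  | TOne => 1
  | TAdd t1 t2 => eval_term e t1 + eval_term e t2
  | TOpp t1 => - eval_term e t1
  | TMul t1 t2 => eval_term e t1 * eval_term e t2
  end.

Fixpoint holds (R : comRingType) (e : nat -> R) (f : rform) : Prop :=
  match f with
  | FEq t1 t2 => eval_term e t1 = eval_term e t2
  | FNot g => ~ holds e g
  | FAnd g h => holds e g /\ holds e h
  | FOr g h => holds e g \/ holds e h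
  | FEx g => exists x : R, holds (env_cons x e) g
  | FAll g => forall x : R, holds (env_cons x e) g
  end.

(* A formula phi(x; y) with x = variable 0 (a single object variable) and
   parameter tuple y = variables 1, 2, ...;  phi(a; b) := holds (a :: b) phi. *)
Definition sat (R : comRingType) (phi : rform) (a : R) (b : nat -> R) : Prop :=
  holds (env_cons a b) phi.

Definition has_ict_pattern2 (R : comRingType) (phi psi : rform) (n : nat) : Prop :=
  exists (b c : nat -> nat -> R),
    forall i j, (i < n)%N -> (j < n)%N ->
      exists a : R, forall k, (k < n)%N ->
        (sat phi a (b k) <-> k = i) /\ (sat psi a (c k) <-> k = j).

(* dp-minimality of Th(R) (language of rings): there is no ict-pattern of
   depth 2 in one variable in a monster model of Th(R); by compactness and
   completeness of Th(R), equivalently, for every pair of formulas the finite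
   patterns realized in R itself have bounded size. *)
Definition dp_minimal (R : comRingType) : Prop :=
  forall phi psi : rform, exists n : nat, ~ has_ict_pattern2 R phi psi n.

(* Main.v *)
Require Import Defs.
From HB Require Import structures.
From mathcomp Require Import all_boot all_algebra.
From mathcomp Require Import zify ring.
From Stdlib Require Import Classical.
Set Implicit Arguments. Unset Strict Implicit.
Set Warnings "-notation-overridden,-ambiguous-paths,-deprecated".
Import GRing.Theory.
Local Open Scope ring_scope.

Definition theta : rform :=
  FAnd (FEx (FEx (FEq (TVar 2) (TAdd (TMul (TVar 3) (TVar 1)) (TMul (TVar 4) (TVar 0))))))
       (FNot (FEx (FEx (FEq (TVar 2) (TAdd (TMul (TVar 3) (TVar 1)) (TMul (TVar 5) (TVar 0))))))).

Definition mk3 (R : Type) (p q r : R) : nat -> R :=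
  fun i => match i with 0%N => p | 1%N => q | _ => r end.

Definition mem2 (R : comRingType) (p q x : R) := exists u v, x = p * u + q * v.

Lemma sat_theta (R : comRingType) (x p q r : R) :
  sat theta x (mk3 p q r) <-> mem2 p q x /\ ~ mem2 p r x.
Proof. by rewrite /sat /=. Qed.

Lemma mem2_0 (R : comRingType) (q x : R) : mem2 0 q x <-> exists v, x = q * v.
Proof.
split=> [[u [v ->]]|[v ->]]; first by exists v; rewrite mul0r add0r.
by exists 0, v; rewrite mul0r add0r.
Qed.

Lemma levelA (R : idomainType) (s w : R) (i k : nat) :
  s != 0 -> ~ (exists r, w = s * r) ->
  ((exists v, s ^+ i * w = s ^+ k * v) <-> (k <= i)%N).
Proof.
move=> s0 nw; split.
  move=> [v hv]; case: (leqP k i) => // lt.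
  exfalso; apply: nw; exists (s ^+ (k - i).-1 * v).
  have e : s ^+ k = s ^+ i * (s * s ^+ (k - i).-1).
    by rewrite -exprS prednK ?subn_gt0 // -exprD subnKC // ltnW.
  have nz : s ^+ i != 0 by rewrite expf_neq0.
  by move: hv; rewrite e -mulrA => /(mulfI nz) ->; rewrite mulrA.
move=> le; exists (s ^+ (i - k) * w); by rewrite mulrA -exprD subnKC.
Qed.

Lemma row_dvd (R : idomainType) (s w : R) (i k : nat) :
  s != 0 -> ~ (exists r, w = s * r) ->
  (sat theta (s ^+ i * w) (mk3 0 (s ^+ k) (s ^+ k.+1)) <-> k = i).
Proof.
move=> s0 nw; rewrite sat_theta !mem2_0 !levelA //; split.
  by case=> h1 h2; apply/eqP; rewrite eqn_leq h1 leqNgt; apply/negP.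
by move=> ->; split => //; rewrite ltnn.
Qed.

Lemma one_sub_pow (R : comRingType) (s : R) (j : nat) : exists r, (1 - s) ^+ j = 1 - s * r.
Proof.
elim: j => [|j [r hr]]; first by exists 0; rewrite expr0 mulr0 subr0.
exists (r + 1 - s * r); rewrite exprS hr; ring.
Qed.

Lemma ndvd_pow (R : comUnitRingType) (s : R) (j : nat) :
  s \isn't a GRing.unit -> ~ (exists r, (1 - s) ^+ j = s * r).
Proof.
move=> su [r' hr']; case: (one_sub_pow s j) => r hr.
move/negP: su; apply; apply/unitrP; exists (r' + r); split; last first.
  by rewrite mulrDr -hr' hr; ring.
by rewrite mulrC mulrDr -hr' hr; ring.
Qed.

Lemma local (R : idomainType) (hdp : dp_minimal R) (s : R) :
  s \is a GRing.unit \/ (1 - s) \is a GRing.unit.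
Proof.
case: (hdp theta theta) => n hn.
case: (boolP (s \is a GRing.unit)) => su; first by left.
case: (boolP ((1 - s) \is a GRing.unit)) => tu; first by right.
exfalso; apply: hn.
have s0 : s != 0 by apply: contraNneq tu => ->; rewrite subr0 unitr1.
have t0 : 1 - s != 0 by apply: contraNneq su => /eqP; rewrite subr_eq0 => /eqP <-; rewrite unitr1.
exists (fun k => mk3 0 (s ^+ k) (s ^+ k.+1)), (fun k => mk3 0 ((1 - s) ^+ k) ((1 - s) ^+ k.+1)).
move=> i j _ _; exists (s ^+ i * (1 - s) ^+ j) => k _; split.
  by apply: row_dvd => //; apply: ndvd_pow.
rewrite mulrC; apply: row_dvd => //.
by have := @ndvd_pow _ _ i tu; rewrite opprB addrC subrK.
Qed.

Lemma memB (R : idomainType) (hdp : dp_minimal R) (a b c : R) (p m : nat) :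
  b \isn't a GRing.unit -> ~ (exists r, b ^+ p = a * r) ->
  (mem2 a (b ^+ m) (a * c + b ^+ p) <-> (m <= p)%N).
Proof.
move=> bu nb; split; last first.
  by move=> le; exists c, (b ^+ (p - m)); rewrite -exprD subnKC.
move=> [u [v h]]; case: (leqP m p) => // lt; exfalso.
have hm : b ^+ m = b ^+ p * b ^+ (m - p) by rewrite -exprD subnKC // ltnW.
have hp : b ^+ p = a * u + b ^+ m * v - a * c by rewrite -h; ring.
have he : b ^+ p * (1 - b ^+ (m - p) * v) = a * (u - c).
  rewrite mulrBr mulr1 mulrA -hm.
  by rewrite {1}hp; ring.
case: (local hdp (b ^+ (m - p) * v)) => hu.
  move: hu; rewrite unitrM unitrX_pos ?subn_gt0 // => /andP [bu' _].
  by move/negP: bu.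
apply: nb; exists ((u - c) * (1 - b ^+ (m - p) * v)^-1).
by rewrite mulrA -he mulrK.
Qed.

Lemma core (R : idomainType) (hdp : dp_minimal R) :
  exists N : nat, forall a b : R, (exists r, a = b * r) \/ (exists r, b ^+ N = a * r).
Proof.
case: (hdp theta theta) => n hn; exists (n + n)%N => a b.
case: (classic (exists r, a = b * r)) => na; first by left.
case: (classic (exists r, b ^+ (n + n) = a * r)) => nb; first by right.
exfalso; apply: hn.
have bu : b \isn't a GRing.unit.
  apply/negP => bu; apply: na; exists (b^-1 * a); by rewrite mulrA mulrV // mul1r.
exists (fun k => mk3 0 (b ^+ k) (b ^+ k.+1)), (fun l => mk3 a (b ^+ (n + l)) (b ^+ (n + l).+1)).
move=> j i jlt ilt.
have b0 : b != 0.
  apply/negP => /eqP b0; apply: nb; exists 0; rewrite b0 mulr0 expr0n.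
  have -> : (n + n == 0)%N = false by apply/eqP; lia.
  by [].
have nbi : ~ (exists r, b ^+ (n + i) = a * r).
  move=> [r hr]; apply: nb; exists (r * b ^+ (n - i)).
  have -> : (n + n = (n + i) + (n - i))%N by lia.
  by rewrite exprD hr mulrA.
exists (b ^+ j * (a + b ^+ (n + i - j))) => k _ /=; split.
  apply: row_dvd => // -[r hr]; apply: na; exists (r - b ^+ (n + i - j).-1).
  rewrite mulrBr -exprS prednK; last by lia.
  by rewrite -hr addrK.
have -> : b ^+ j * (a + b ^+ (n + i - j)) = a * b ^+ j + b ^+ (n + i).
  rewrite mulrDr -exprD mulrC; congr (_ + _); congr (_ ^+ _); lia.
rewrite sat_theta !memB //; lia.
Qed.

Unset Implicit Arguments. Set Strict Implicit.
Theorem mainTheorem10 (R : idomainType) (hdp : dp_minimal R) :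
  (forall (P : R -> Prop), is_prime_ideal P -> forall a : R,
     (forall x, P x -> in_principal a x) \/ (forall x, in_principal a x -> P x))
  /\
  (exists N : nat, forall (M : R -> Prop), is_maximal_ideal M ->
     forall a b : R, M a -> M b -> in_principal b a \/ in_principal a (b ^+ N)).
Proof.
have [N hN] := core hdp.
split; last by exists N => M _ a b _ _; exact: hN.
move=> P [[P0 Padd Pmul] P1 Pprime] a.
case: (classic (P a)) => Pa.
  by right => x [r ->]; rewrite mulrC; apply: Pmul.
left => x Px; case: (hN x a) => // -[r hr].
exfalso; apply: Pa.
have : P (a ^+ N) by rewrite hr mulrC; apply: Pmul.
elim: N {hN hr} => [|k IH]; first by rewrite expr0.
by rewrite exprS => /Pprime [].
Qed.
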